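(* Let $q$ be a prime power, let $\mathcal{H}_q$ be the Hermitian curve over $\mathbb{F}_{q^2}$, of genus $g(\mathcal{H}_q)=\frac{q(q-1)}{2}$, and let $X,T$ be fixed positive integers (security and privacy parameters). Let $L$ be an integer with $g(\mathcal{H}_q)\le L\le q^3-g(\mathcal{H}_q)$ and $L+g(\mathcal{H}_q)\equiv 0\pmod q$, and set $m=\frac{L+g(\mathcal{H}_q)}{q}$. Let $\alpha_1,\dots,\alpha_m\in\mathbb{F}_{q^2}\setminus\{0\}$ be pairwise distinct and let $P_{i,z}=(\alpha_i,\beta_{i,z})$, $i\in[m]$, $z\in[q]$, be $mq$ (distinct) affine $\mathbb{F}_{q^2}$-rational points of $\mathcal{H}_q$. If there exist $L+X+T+\frac{7q^2-3q-6}{2}+1$ $\mathbb{F}_{q^2}$-rational points of $\mathcal{H}_q$ distinct from $P_\infty$, $P_0$ and all $P_{i,z}$, then, with $N=L+X+T+3q^2-q-2$ servers, there exists an $X$-secure and $T$-private information retrieval scheme over $\mathbb{F}_{q^2}$ with rate $$\mathcal{R}^{\mathcal{H}_q}=\frac{L}{N}=1-\frac{X+T+3q^2-q-2}{N}.$$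
   Context: The Hermitian curve $\mathcal{H}_q$ is the projective non-singular curve over $\mathbb{F}_{q^2}$ with affine equation $X^{q+1}=Y^q+Y$; it has $q^3+1$ $\mathbb{F}_{q^2}$-rational points, $P_\infty$ denotes its unique point at infinity and $P_0=(0,0)$. $[n]=\{1,\dots,n\}$. An $X$-secure and $T$-private information retrieval (XSTPIR) scheme with $N$ servers: $N$ non-communicating servers store (encoded) data about $M$ independent files $s_1,\dots,s_M\in\mathbb{F}_{q^2}^L$; a user wishing to retrieve $s_\mu$ sends a query $Q_n$ to server $n$, which returns an answer $A_n$; the user must be able to recover $s_\mu$ from $A_1,\dots,A_N$; $X$-security means the data stored at any $X$ servers reveals nothing about the file contents; $T$-privacy means the queries sent to any $T$ servers reveal nothing about the index $\mu$. The rate is the ratio between the size of the desired file and the total amount of downloaded data; here it equals $L/N$ (one symbol downloaded from each server). *)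

(* Defs.v *)
From HB Require Import structures.
From mathcomp Require Import all_boot all_order all_algebra.
Set Implicit Arguments. Unset Strict Implicit. Unset Printing Implicit Defensive.
Import Order.TTheory GRing.Theory Num.Theory.
Local Open Scope ring_scope.

(* Affine points (x, y) with x^(q+1) = y^q + y.  The unique point at
   infinity P_inf is not affine, so "rational points distinct from P_inf"
   are exactly the affine points below. *)
Definition on_hermitian (F : fieldType) (q : nat) (P : F * F) : bool :=
  P.1 ^+ q.+1 == P.2 ^+ q + P.2.

Definition herm_genus (q : nat) : nat := (q * (q - 1)) %/ 2.

Definition prime_power (q : nat) : Prop :=
  exists p k : nat, [/\ prime p, (0 < k)%N & q = p ^ k]%N.

(* Distribution of f : R -> V under the uniform distribution on the finite
   randomness space R is recorded by the counts #|f^-1(v)|. *)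
Definition same_distr (R1 R2 : finType) (V : eqType)
  (f : R1 -> V) (g : R2 -> V) : Prop :=
  forall v : V, #|[set r | f r == v]| = #|[set r | g r == v]|.

Definition restrict (N : nat) (W : Type) (S : {set 'I_N}) (w : 'I_N -> W)
  : 'I_N -> option W :=
  fun n => if n \in S then Some (w n) else None.

(* An XSTPIR scheme with N servers, M files s_1..s_M in F^L.
   - storage randomness rs (uniform on finite RS), server n stores
     store s rs n;
   - user randomness r (uniform on finite RQ, independent of rs), the
     query to server n for desired index mu is query mu r n;
   - server n returns ONE symbol of F, computed from its query and its
     own stored data; hence the download is N symbols and rate = L/N;
   - zero-error decoding of s_mu from the N answers;
   - X-security: the joint distribution of the data stored at any set of
     at most X servers does not depend on the file contents;
   - T-privacy: the joint distribution of the queries sent to any set of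
     at most T servers does not depend on mu. *)
Record xstpir_scheme (F : finFieldType) (N M L X T : nat) := XSTPIR {
  RS : finType;
  Wt : finType;
  RQ : finType;
  Qt : finType;
  RS_nonempty : (0 < #|RS|)%N;
  RQ_nonempty : (0 < #|RQ|)%N;
  store : {ffun 'I_M -> 'rV[F]_L} -> RS -> 'I_N -> Wt;
  query : 'I_M -> RQ -> 'I_N -> Qt;
  answer : 'I_N -> Qt -> Wt -> F;
  decode : 'I_M -> RQ -> ('I_N -> F) -> 'rV[F]_L;
  correct : forall (s : {ffun 'I_M -> 'rV[F]_L}) (rs : RS) (mu : 'I_M) (r : RQ),
    decode mu r (fun n => answer n (query mu r n) (store s rs n)) = s mu;
  X_secure : forall (S : {set 'I_N}), (#|S| <= X)%N ->
    forall s s' : {ffun 'I_M -> 'rV[F]_L},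
      same_distr (fun rs : RS => [ffun n => restrict S (store s rs) n])
                 (fun rs : RS => [ffun n => restrict S (store s' rs) n]);
  T_private : forall (S : {set 'I_N}), (#|S| <= T)%N ->
    forall mu mu' : 'I_M,
      same_distr (fun r : RQ => [ffun n => restrict S (query mu r) n])
                 (fun r : RQ => [ffun n => restrict S (query mu' r) n])
}.

Definition xstpir_rate (N L : nat) : rat := (L%:R / N%:R).

(* Main.v *)
Require Import Defs.
From HB Require Import structures.
From mathcomp Require Import all_boot all_order all_algebra.
From mathcomp Require Import finfield zify ring.
From Stdlib Require Import ClassicalEpsilon.
Set Implicit Arguments. Unset Strict Implicit. Unset Printing Implicit Defensive.
Import Order.TTheory GRing.Theory Num.Theory.
Local Open Scope ring_scope.

Section Herm.
Variable F : finFieldType.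
Variable q : nat.
Hypothesis hq : (1 < q)%N.

Definition sgb (t : nat) : bool := (t %% q <= t %/ q)%N.
Definition M (t : nat) (P : F * F) : F :=
  if sgb t then P.1 ^+ (t %/ q - t %% q) * P.2 ^+ (t %% q) else 0.
Definition onH (P : F * F) := on_hermitian q P.
Definition ev n (c : nat -> F) (P : F * F) := \sum_(t < n) c t * M t P.
Definition Lt n (f : F * F -> F) := exists c, forall P, onH P -> f P = ev n c P.

Lemma q_gt0 : (0 < q)%N. Proof. by apply: ltn_trans hq. Qed.

Lemma divmod_char i j : (j < q)%N -> ((q * (i + j) + j) %/ q = i + j /\ (q * (i + j) + j) %% q = j)%N.
Proof.
move=> hj; split.
  by rewrite mulnC divnMDl ?q_gt0 // divn_small // addn0.
by rewrite mulnC modnMDl modn_small.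
Qed.

Lemma sgb_char i j : (j < q)%N -> sgb (q * (i + j) + j).
Proof. move=> hj; have [h1 h2] := divmod_char i hj; rewrite /sgb h1 h2; lia. Qed.

Lemma Mij i j P : (j < q)%N -> M (q * (i + j) + j) P = P.1 ^+ i * P.2 ^+ j.
Proof.
move=> hj; have [h1 h2] := divmod_char i hj.
rewrite /M sgb_char // h1 h2; congr (_ ^+ _ * _); lia.
Qed.

Lemma sgb_dec t : sgb t -> t = (q * ((t %/ q - t %% q) + t %% q) + t %% q)%N.
Proof.
rewrite /sgb => h; rewrite subnK //. by rewrite {1}(divn_eq t q) mulnC.
Qed.

Lemma sgb_add a b : sgb a -> sgb b -> sgb (a + b).
Proof.
move=> ha hb; rewrite (sgb_dec ha) (sgb_dec hb).
set i1 := (a %/ q - a %% q)%N; set j1 := (a %% q)%N.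
set i2 := (b %/ q - b %% q)%N; set j2 := (b %% q)%N.
have hj1 : (j1 < q)%N by apply: ltn_pmod q_gt0.
have hj2 : (j2 < q)%N by apply: ltn_pmod q_gt0.
case: (ltnP (j1 + j2) q) => h.
  have -> : (q * (i1 + j1) + j1 + (q * (i2 + j2) + j2) = q * ((i1 + i2) + (j1 + j2)) + (j1 + j2))%N by nia.
  exact: sgb_char.
have -> : (q * (i1 + j1) + j1 + (q * (i2 + j2) + j2) = q * ((i1 + i2 + q.+1) + (j1 + j2 - q)) + (j1 + j2 - q))%N.
  nia.
apply: sgb_char; lia.
Qed.

Lemma sgb_big a : (q * (q - 1) <= a)%N -> sgb a.
Proof.
move=> h; rewrite /sgb.
have hr : (a %% q < q)%N by apply: ltn_pmod q_gt0.
have hd : (q - 1 <= a %/ q)%N by rewrite leq_divRL ?q_gt0 // mulnC.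
lia.
Qed.


Lemma Lt_ext n f g : (forall P, onH P -> f P = g P) -> Lt n f -> Lt n g.
Proof. move=> e [c hc]; exists c => P hP; by rewrite -e // hc. Qed.

Lemma Lt0 n : Lt n (fun _ => 0).
Proof. exists (fun _ => 0) => P _; rewrite /ev big1 // => t _; by rewrite mul0r. Qed.

Lemma LtD n f g : Lt n f -> Lt n g -> Lt n (fun P => f P + g P).
Proof.
move=> [c hc] [d hd]; exists (fun t => c t + d t) => P hP.
by rewrite hc // hd // /ev -big_split /=; apply: eq_bigr => t _; rewrite mulrDl.
Qed.

Lemma LtZ n a f : Lt n f -> Lt n (fun P => a * f P).
Proof.
move=> [c hc]; exists (fun t => a * c t) => P hP.
by rewrite hc // /ev mulr_sumr; apply: eq_bigr => t _; rewrite mulrA.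
Qed.

Lemma LtN n f : Lt n f -> Lt n (fun P => - f P).
Proof. move=> h; apply: Lt_ext (LtZ (-1) h) => P _; by rewrite mulN1r. Qed.

Lemma LtB n f g : Lt n f -> Lt n g -> Lt n (fun P => f P - g P).
Proof. by move=> hf hg; apply: LtD hf (LtN hg). Qed.

Lemma Lt_big n (I : Type) (s : seq I) (Pr : pred I) (Fs : I -> F * F -> F) :
  (forall i, Pr i -> Lt n (Fs i)) -> Lt n (fun P => \sum_(i <- s | Pr i) Fs i P).
Proof.
move=> h; elim: s => [|x s IH].
  by apply: Lt_ext (Lt0 n) => P _; rewrite big_nil.
case hx: (Pr x).
  by apply: Lt_ext (LtD (h x hx) IH) => P _; rewrite big_cons hx.
by apply: Lt_ext IH => P _; rewrite big_cons hx.
Qed.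

Lemma Lt_mono n n' f : (n <= n')%N -> Lt n f -> Lt n' f.
Proof.
move=> hn [c hc]; exists (fun t => if (t < n)%N then c t else 0) => P hP.
rewrite hc // /ev (big_ord_widen n' (fun t => c t * M t P) hn) big_mkcond /=.
by apply: eq_bigr => t _; case: ifP => //; rewrite mul0r.
Qed.

Lemma LtM n t : (t < n)%N -> Lt n (M t).
Proof.
move=> ht; exists (fun u => if u == t then 1 else 0) => P _.
rewrite /ev (bigD1 (Ordinal ht)) //= eqxx mul1r big1 ?addr0 // => u hu.
case: eqP => [e|_]; last by rewrite mul0r.
by move: hu; rewrite (_ : u = Ordinal ht) ?eqxx //; apply: val_inj.
Qed.

Lemma M0 P : M 0 P = 1.
Proof. by rewrite /M /sgb mod0n div0n /= !expr0 mulr1. Qed.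

Lemma Mx P : M q P = P.1.
Proof. by have := Mij 1 P q_gt0; rewrite addn0 muln1 expr1 expr0 mulr1. Qed.

Lemma My P : M q.+1 P = P.2.
Proof. by have := Mij 0 P hq; rewrite add0n muln1 addn1 expr0 mul1r expr1. Qed.

Lemma Lt_const a : Lt 1 (fun _ => a).
Proof. apply: Lt_ext (LtZ a (LtM (ltnSn 0))) => P _; by rewrite M0 mulr1. Qed.

Lemma onH_eq P : onH P -> P.1 ^+ q.+1 = P.2 ^+ q + P.2.
Proof. by move/eqP. Qed.

Lemma MMij i1 j1 i2 j2 P : (j1 < q)%N -> (j2 < q)%N -> onH P ->
  M (q * (i1 + j1) + j1) P * M (q * (i2 + j2) + j2) P =
  if (j1 + j2 < q)%N then M (q * ((i1 + i2) + (j1 + j2)) + (j1 + j2)) P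
  else M (q * ((i1 + i2 + q.+1) + (j1 + j2 - q)) + (j1 + j2 - q)) P
       - M (q * ((i1 + i2) + (j1 + j2 - q).+1) + (j1 + j2 - q).+1) P.
Proof.
move=> h1 h2 hP; rewrite (Mij i1 P h1) (Mij i2 P h2).
case: ifP => h.
  rewrite Mij // !exprD -!mulrA; congr (_ * _); by rewrite mulrCA.
have hge : (q <= j1 + j2)%N by rewrite leqNgt h.
have hl : (j1 + j2 - q < q)%N by lia.
have hl' : ((j1 + j2 - q).+1 < q)%N by lia.
rewrite (Mij _ P hl) (Mij _ P hl').
have e : P.2 ^+ (j1 + j2) = P.2 ^+ (j1 + j2 - q) * P.2 ^+ q by rewrite -exprD subnK.
have ey : P.2 ^+ q = P.1 ^+ q.+1 - P.2 by rewrite onH_eq // addrK.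
rewrite mulrACA -!exprD e ey !exprD exprS mulrBr mulrBr.
congr (_ - _); first by rewrite -[RHS]mulrA; congr (_ * _); rewrite mulrC.
by rewrite exprSr.
Qed.

Lemma LtMM t u : Lt (t + u).+1 (fun P => M t P * M u P).
Proof.
case ht: (sgb t); last first.
  by apply: Lt_ext (Lt0 _) => P _; rewrite /M ht mul0r.
case hu: (sgb u); last first.
  by apply: Lt_ext (Lt0 _) => P _; rewrite /M hu mulr0.
have et := sgb_dec ht; have eu := sgb_dec hu.
set i1 := (t %/ q - t %% q)%N in et; set j1 := (t %% q)%N in et.
set i2 := (u %/ q - u %% q)%N in eu; set j2 := (u %% q)%N in eu.
have hj1 : (j1 < q)%N by apply: ltn_pmod q_gt0.
have hj2 : (j2 < q)%N by apply: ltn_pmod q_gt0.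
have E : forall P, onH P -> M (q * (i1 + j1) + j1) P * M (q * (i2 + j2) + j2) P = M t P * M u P.
  by move=> P _; rewrite -et -eu.
apply: Lt_ext E _.
case h: (j1 + j2 < q)%N.
  have E2 : forall P, onH P -> M (q * ((i1 + i2) + (j1 + j2)) + (j1 + j2)) P =
     M (q * (i1 + j1) + j1) P * M (q * (i2 + j2) + j2) P.
    by move=> P hP; rewrite MMij // h.
  apply: Lt_ext E2 _; apply: LtM; lia.
have E2 : forall P, onH P -> M (q * ((i1 + i2 + q.+1) + (j1 + j2 - q)) + (j1 + j2 - q)) P
       - M (q * ((i1 + i2) + (j1 + j2 - q).+1) + (j1 + j2 - q).+1) P =
     M (q * (i1 + j1) + j1) P * M (q * (i2 + j2) + j2) P.
  by move=> P hP; rewrite MMij // h.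
apply: Lt_ext E2 _.
have hge : (q <= j1 + j2)%N by rewrite leqNgt h.
apply: LtB; apply: LtM; nia.
Qed.

Lemma LtH0 f : Lt 0 f -> forall P, onH P -> f P = 0.
Proof. by move=> [c hc] P hP; rewrite hc // /ev big_ord0. Qed.

Lemma Lt_mul n m f g : Lt n f -> Lt m g -> Lt (n + m).-1 (fun P => f P * g P).
Proof.
case: n => [|n] hf.
  move=> _; apply: Lt_ext (Lt0 _) => P hP; by rewrite (LtH0 hf hP) mul0r.
case: m => [|m] hg.
  apply: Lt_ext (Lt0 _) => P hP; by rewrite (LtH0 hg hP) mulr0.
case: hf => c hc; case: hg => d hd.
have E : forall P, onH P -> \sum_(t < n.+1) \sum_(u < m.+1) (c t * d u) * (M t P * M u P) = f P * g P.
  move=> P hP; rewrite hc // hd // /ev big_distrlr /=.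
  apply: eq_bigr => t _; apply: eq_bigr => u _.
  by rewrite mulrACA.
apply: Lt_ext E _.
apply: Lt_big => t _; apply: Lt_big => u _; apply: LtZ.
apply: Lt_mono (LtMM t u).
have := ltn_ord t; have := ltn_ord u; lia.
Qed.


Definition lead w (f : F * F -> F) := sgb w /\ exists a, a != 0 /\
  exists g, Lt w g /\ forall P, onH P -> f P = a * M w P + g P.

Lemma MM_low w u : sgb w -> sgb u -> Lt (w + u) (fun P => M w P * M u P - M (w + u) P).
Proof.
move=> ht hu.
have et := sgb_dec ht; have eu := sgb_dec hu.
set i1 := (w %/ q - w %% q)%N in et; set j1 := (w %% q)%N in et.
set i2 := (u %/ q - u %% q)%N in eu; set j2 := (u %% q)%N in eu.
have hj1 : (j1 < q)%N by apply: ltn_pmod q_gt0.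
have hj2 : (j2 < q)%N by apply: ltn_pmod q_gt0.
case h: (j1 + j2 < q)%N.
  apply: Lt_ext (Lt0 _) => P hP.
  rewrite {1}et {1}eu MMij // h.
  have -> : (q * ((i1 + i2) + (j1 + j2)) + (j1 + j2) = w + u)%N by rewrite et eu; nia.
  by rewrite subrr.
have hge : (q <= j1 + j2)%N by rewrite leqNgt h.
have E : forall P, onH P -> - M (q * ((i1 + i2) + (j1 + j2 - q).+1) + (j1 + j2 - q).+1) P =
   M w P * M u P - M (w + u) P.
  move=> P hP; rewrite {1}et {1}eu MMij // h.
  have -> : (q * ((i1 + i2 + q.+1) + (j1 + j2 - q)) + (j1 + j2 - q) = w + u)%N by rewrite et eu; nia.
  by rewrite addrAC subrr add0r.
apply: Lt_ext E _; apply: LtN; apply: LtM; rewrite et eu; nia.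
Qed.

Lemma lead_mul w u f h : lead w f -> lead u h -> lead (w + u) (fun P => f P * h P).
Proof.
move=> [sw [a [a0 [g [hg ef]]]]] [su [b [b0 [k [hk eh]]]]].
split; first exact: sgb_add.
exists (a * b); split; first by rewrite mulf_neq0.
exists (fun P => a * b * (M w P * M u P - M (w + u) P) + a * (M w P * k P)
   + b * (g P * M u P) + g P * k P); split.
  apply: LtD; [apply: LtD; [apply: LtD|]|].
  - by apply: LtZ; apply: MM_low.
  - apply: LtZ; have := Lt_mul (LtM (ltnSn w)) hk; by rewrite addSn.
  - apply: LtZ; have := Lt_mul hg (LtM (ltnSn u)); by rewrite addnS.
  - apply: Lt_mono (Lt_mul hg hk); exact: leq_pred.
move=> P hP; rewrite ef // eh //; ring.
Qed.

Lemma lead_M v : sgb v -> lead v (M v).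
Proof.
move=> hv; split => //; exists 1; split; first exact: oner_neq0.
exists (fun _ => 0); split; first exact: Lt0.
by move=> P _; rewrite mul1r addr0.
Qed.

Lemma sgb_q : sgb q.
Proof. by rewrite /sgb modnn divnn q_gt0. Qed.

Lemma lead_x (a : F) : lead q (fun P => P.1 - a).
Proof.
split; first exact: sgb_q.
exists 1; split; first exact: oner_neq0.
exists (fun _ => - a); split; first by apply: Lt_mono (Lt_const _); exact: q_gt0.
by move=> P _; rewrite Mx mul1r.
Qed.

Definition Ep (S : {set F * F}) v := exists f, lead v f /\ forall P, P \in S -> f P = 0.

Definition Eb (S : {set F * F}) v : bool := if excluded_middle_informative (Ep S v) then true else false.

Lemma EbP (S : {set F * F}) v : reflect (Ep S v) (Eb S v).
Proof. by rewrite /Eb; case: excluded_middle_informative => h; constructor. Qed.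

Lemma Ep_add (S : {set F * F}) w u : Ep S w -> sgb u -> Ep S (w + u).
Proof.
move=> [f [hf hz]] hu; exists (fun P => f P * M u P); split.
  exact: lead_mul hf (lead_M hu).
by move=> P hP; rewrite hz // mul0r.
Qed.

Definition Db (S : {set F * F}) v := sgb v && ~~ Eb S v.

Definition spanD (S : {set F * F}) B (h : F * F -> F) := exists d : nat -> F,
  forall P, P \in S -> h P = \sum_(t < B) (if Db S t then d t else 0) * M t P.

Lemma spanD_ext (S : {set F * F}) B (f g : F * F -> F) : (forall P, P \in S -> f P = g P) -> spanD S B f -> spanD S B g.
Proof. move=> e [d hd]; exists d => P hP; by rewrite -e // hd. Qed.

Lemma spanD0 (S : {set F * F}) B : spanD S B (fun _ => 0).
Proof. exists (fun _ => 0) => P _; rewrite big1 // => t _; by case: ifP; rewrite mul0r. Qed.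

Lemma spanDD (S : {set F * F}) B (f g : F * F -> F) : spanD S B f -> spanD S B g -> spanD S B (fun P => f P + g P).
Proof.
move=> [c hc] [d hd]; exists (fun t => c t + d t) => P hP.
rewrite hc // hd // -big_split /=; apply: eq_bigr => t _.
by case: ifP; rewrite ?mul0r ?addr0 ?mulrDl.
Qed.

Lemma spanDZ (S : {set F * F}) B a (f : F * F -> F) : spanD S B f -> spanD S B (fun P => a * f P).
Proof.
move=> [c hc]; exists (fun t => a * c t) => P hP.
rewrite hc // mulr_sumr; apply: eq_bigr => t _.
by case: ifP; rewrite ?mul0r ?mulr0 ?mulrA.
Qed.

Lemma spanD_big (S : {set F * F}) B (I : Type) (s : seq I) (Pr : pred I) (Fs : I -> F * F -> F) :
  (forall i, Pr i -> spanD S B (Fs i)) -> spanD S B (fun P => \sum_(i <- s | Pr i) Fs i P).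
Proof.
move=> h; elim: s => [|x s IH].
  by apply: spanD_ext (spanD0 S B) => P _; rewrite big_nil.
case hx: (Pr x).
  by apply: spanD_ext (spanDD (h x hx) IH) => P _; rewrite big_cons hx.
by apply: spanD_ext IH => P _; rewrite big_cons hx.
Qed.

Lemma span_M (S : {set F * F}) B : (forall P, P \in S -> onH P) ->
  (forall v, (B <= v)%N -> sgb v -> Ep S v) -> forall v, spanD S B (M v).
Proof.
move=> hS hB; elim/ltn_ind => v IH.
case hv: (sgb v); last first.
  by apply: spanD_ext (spanD0 S B) => P _; rewrite /M hv.
case hE: (Eb S v).
  have [f [[_ [a [a0 [g [[c hc] ef]]]]] hz]] := EbP S v hE.
  have E : forall P, P \in S -> - a^-1 * (\sum_(t < v) c t * M t P) = M v P.
    move=> P hP; have := hz P hP; rewrite ef ?hS // hc ?hS // /ev => /eqP.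
    rewrite addr_eq0 => /eqP e.
    have -> : M v P = a^-1 * (a * M v P) by rewrite mulrA mulVf // mul1r.
    by rewrite e mulrN mulNr.
  apply: spanD_ext E _; apply: spanDZ; apply: spanD_big => t _; apply: spanDZ.
  exact: IH.
have hvB : (v < B)%N.
  rewrite ltnNge; apply/negP => h; move: hE; have := hB v h hv; by move/EbP => ->.
exists (fun t => if t == v then 1 else 0) => P _.
rewrite (bigD1 (Ordinal hvB)) //= /Db hv hE eqxx /= mul1r big1 ?addr0 // => u hu.
case: ifP => _; last by rewrite mul0r.
case: eqP => [e|_]; last by rewrite mul0r.
by move: hu; rewrite (_ : u = Ordinal hvB) ?eqxx //; apply: val_inj.
Qed.

Lemma span_Lt (S : {set F * F}) B n h : (forall P, P \in S -> onH P) ->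
  (forall v, (B <= v)%N -> sgb v -> Ep S v) -> Lt n h -> spanD S B h.
Proof.
move=> hS hB [c hc].
apply: spanD_ext (fun P hP => esym (hc P (hS P hP))) _.
rewrite /ev; apply: spanD_big => t _; apply: spanDZ; exact: span_M.
Qed.


Lemma card_F_gt1 : (1 < #|F|)%N.
Proof. exact: card_finNzRing_gt1. Qed.

Definition PF (T : finType) (A : {set T}) := pffun_on (0 : F) A (predT : {pred F}).

Lemma card_PF (T : finType) (A : {set T}) : #|PF A| = (#|F| ^ #|A|)%N.
Proof. by rewrite /PF card_pffun_on; congr (_ ^ _)%N. Qed.

Lemma PFP (T : finType) (A : {set T}) (g : {ffun T -> F}) :
  reflect (forall x, x \notin A -> g x = 0) (g \in PF A).
Proof.
apply: (iffP pffun_onP) => [[/supportP h _]|h]; first exact: h.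
split; first exact/supportP.
by move=> x _.
Qed.

Definition Phi (S : {set F * F}) B (d : {ffun 'I_B -> F}) : {ffun F * F -> F} :=
  [ffun P => if P \in S then \sum_(t < B) d t * M t P else 0].

Lemma indep (S : {set F * F}) n (e : nat -> F) : (forall P, P \in S -> onH P) ->
  (forall t, ~~ Db S t -> e t = 0) ->
  (forall P, P \in S -> \sum_(t < n) e t * M t P = 0) -> forall t, (t < n)%N -> e t = 0.
Proof.
move=> hS he; elim: n => [|n IH] hz t ht; first by [].
have en : e n = 0.
  case: (boolP (Db S n)) => hD; last exact: he.
  apply/eqP/contraT => en.
  move: (hD); rewrite /Db => /andP [hsg /negP hnE]; exfalso; apply: hnE; apply/EbP.
  exists (fun P => \sum_(t < n.+1) e t * M t P); split; last exact: hz.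
  split => //; exists (e n); split => //.
  exists (fun P => \sum_(t < n) e t * M t P); split; first by exists e.
  by move=> P _; rewrite big_ord_recr /= addrC.
have hz' : forall P, P \in S -> \sum_(t < n) e t * M t P = 0.
  by move=> P hP; have := hz P hP; rewrite big_ord_recr /= en mul0r addr0.
case: (ltnP t n) => h; first exact: IH.
by have -> : t = n by lia.
Qed.

Lemma card_S_le_D (S : {set F * F}) B : (forall P, P \in S -> onH P) ->
  (forall v, (B <= v)%N -> sgb v -> Ep S v) ->
  (forall g : F * F -> F, exists n, Lt n g) ->
  (#|S| <= #|[set t : 'I_B | Db S t]|)%N.
Proof.
move=> hS hB hall.
set DS := [set t : 'I_B | Db S t].
have sub : PF S \subset [set Phi S d | d in PF DS].
  apply/subsetP => g /PFP hg.
  have [n hn] := hall g.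
  have [d0 hd0] := span_Lt hS hB hn.
  apply/imsetP; exists [ffun t : 'I_B => if Db S t then d0 t else 0].
    by apply/PFP => t; rewrite inE ffunE => /negbTE ->.
  apply/ffunP => P; rewrite ffunE.
  case: ifP => hP; last by apply: hg; rewrite hP.
  by rewrite hd0 //; apply: eq_bigr => t _; rewrite ffunE.
have := subset_leq_card sub; rewrite card_PF.
move/leq_trans => /(_ _ (leq_imset_card _ _)); rewrite card_PF.
by rewrite leq_exp2l // card_F_gt1.
Qed.

Lemma card_D_le_S (S : {set F * F}) B : (forall P, P \in S -> onH P) ->
  (#|[set t : 'I_B | Db S t]| <= #|S|)%N.
Proof.
move=> hS.
set DS := [set t : 'I_B | Db S t].
have inj : {in PF DS &, injective (Phi S (B:=B))}.
  move=> d1 d2 /PFP h1 /PFP h2 e12; apply/ffunP => t.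
  pose e := fun u : nat => odflt 0 (omap (fun i => d1 i - d2 i) (insub u)).
  have eE : forall i : 'I_B, e i = d1 i - d2 i by move=> i; rewrite /e valK.
  have hz : forall P, P \in S -> \sum_(u < B) e u * M u P = 0.
    move=> P hP; have := congr1 (fun f : {ffun F * F -> F} => f P) e12; rewrite !ffunE hP => e0.
    rewrite (eq_bigr (fun u : 'I_B => d1 u * M u P - d2 u * M u P)); last by move=> u _; rewrite eE mulrBl.
    by rewrite sumrB e0 subrr.
  have he : forall u, ~~ Db S u -> e u = 0.
    move=> u hu; rewrite /e; case: insubP => //= i _ ei.
    by rewrite h1 ?h2 ?subrr // inE ei.
  apply/eqP; rewrite -subr_eq0 -eE; apply/eqP; exact: (indep hS he hz).
have sub : [set Phi S d | d in PF DS] \subset PF S.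
  apply/subsetP => g /imsetP [d _ ->]; apply/PFP => P hP.
  by rewrite ffunE (negbTE hP).
have := subset_leq_card sub; rewrite card_in_imset // !card_PF.
by rewrite leq_exp2l // card_F_gt1.
Qed.


Lemma fermat (u : F) : u ^+ (#|F|.-1) = (u != 0)%:R.
Proof.
have h1 := card_F_gt1.
case: (eqVneq u 0) => [->|hu].
  rewrite expr0n /=; have -> : (#|F|.-1 == 0)%N = false by apply/eqP; lia.
  by [].
apply: (mulfI hu); rewrite -exprS prednK ?expf_card ?mulr1 //; lia.
Qed.

Lemma Lt_pow n f k : Lt n.+1 f -> Lt (n * k).+1 (fun P => f P ^+ k).
Proof.
move=> hf; elim: k => [|k IH].
  by rewrite muln0; apply: Lt_ext (Lt_const 1) => P _; rewrite expr0.
have := Lt_mul hf IH; have -> : ((n.+1 + (n * k).+1).-1 = (n * k.+1).+1)%N by rewrite mulnS; lia.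
by move=> h; apply: Lt_ext h => P _; rewrite exprS.
Qed.

Lemma Lt_x_a a : Lt q.+1 (fun P => P.1 - a).
Proof.
apply: LtB; first by apply: Lt_ext (LtM (ltnSn q)) => P _; rewrite Mx.
by apply: Lt_mono (Lt_const _).
Qed.

Lemma Lt_y_b b : Lt q.+2 (fun P => P.2 - b).
Proof.
apply: LtB; first by apply: Lt_ext (LtM (ltnSn q.+1)) => P _; rewrite My.
by apply: Lt_mono (Lt_const _).
Qed.

Lemma all_Lt (g : F * F -> F) : exists n, Lt n g.
Proof.
set k := #|F|.-1.
pose del (Q P : F * F) := (1 - (P.1 - Q.1) ^+ k) * (1 - (P.2 - Q.2) ^+ k).
have delE : forall Q P, del Q P = (P == Q)%:R.
  move=> [a b] [x y]; rewrite /del /= !fermat !subr_eq0.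
  rewrite xpair_eqE.
  have [e1|h1] := eqVneq x a; have [e2|h2] := eqVneq y b;
  by rewrite ?e1 ?e2 ?eqxx ?h1 ?h2 /= ?subrr ?subr0 ?mul0r ?mulr0 ?mulr1.
exists (((q * k).+1 + (q.+1 * k).+1).-1).
have E : forall P, onH P -> \sum_Q g Q * del Q P = g P.
  move=> P _; rewrite (bigD1 P) //= delE eqxx mulr1 big1 ?addr0 // => Q hQ.
  by rewrite delE eq_sym (negbTE hQ) mulr0.
apply: Lt_ext E _; apply: Lt_big => Q _; apply: LtZ.
apply: Lt_mul.
  apply: LtB; first by apply: Lt_mono (Lt_const 1).
  exact: Lt_pow (Lt_x_a _).
apply: LtB; first by apply: Lt_mono (Lt_const 1).
exact: Lt_pow (Lt_y_b _).
Qed.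

Lemma sgb0 : sgb 0.
Proof. by rewrite /sgb mod0n div0n. Qed.

Lemma sgb_mul w j : sgb w -> sgb (w * j).
Proof.
move=> hw; elim: j => [|j IH]; first by rewrite muln0 sgb0.
by rewrite mulnS; apply: sgb_add.
Qed.

Lemma ZB0 (S : {set F * F}) w f : (forall P, P \in S -> onH P) ->
  lead w f -> (forall P, P \in S -> f P = 0) -> (#|S| <= w)%N.
Proof.
move=> hS hl hz.
have hEw : Ep S w by exists f.
set B := (w + q * q)%N.
have hB : forall v, (B <= v)%N -> sgb v -> Ep S v.
  move=> v hv _; have -> : v = (w + (v - w))%N by lia.
  apply: Ep_add hEw _; apply: sgb_big; nia.
apply: leq_trans (card_S_le_D hS hB all_Lt) _.
set DS := [set t : 'I_B | Db S t].
case: (posnP w) => [w0|wpos].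
  have -> : DS = set0.
    apply/setP => t; rewrite !inE /Db; apply/negbTE; rewrite negb_and negbK.
    case: (boolP (sgb t)) => //= ht; apply/EbP.
    by have := Ep_add hEw ht; rewrite w0 add0n.
  by rewrite cards0.
pose phi (t : 'I_B) := Ordinal (ltn_pmod t wpos).
have inj : {in DS &, injective phi}.
  have key : forall t1 t2 : 'I_B, t1 \in DS -> t2 \in DS -> (t1 %% w = t2 %% w)%N -> (t1 < t2)%N -> False.
    move=> t1 t2; rewrite !inE /Db => /andP [s1 _] /andP [_ /negP n2] em lt.
    apply: n2; apply/EbP.
    have e1 := divn_eq t1 w; have e2 := divn_eq t2 w.
    have lk : (t1 %/ w < t2 %/ w)%N.
      rewrite ltnNge; apply/negP => hle.
      have : (t2 %/ w * w <= t1 %/ w * w)%N by rewrite leq_mul2r hle orbT.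
      lia.
    have -> : nat_of_ord t2 = (w + (t1 + w * (t2 %/ w - t1 %/ w - 1)))%N by nia.
    apply: Ep_add hEw _; apply: sgb_add s1 _; apply: sgb_mul.
    by case: hl.
  move=> t1 t2 h1 h2 /(congr1 val) /= em.
  case: (ltngtP t1 t2) => lt; [by case: (key _ _ h1 h2 em lt)|by case: (key _ _ h2 h1 (esym em) lt)|].
  exact: val_inj.
rewrite -(card_in_imset inj).
by apply: leq_trans (max_card _) _; rewrite card_ord.
Qed.

Lemma ZB (S : {set F * F}) n f : (forall P, P \in S -> onH P) ->
  Lt n f -> (forall P, P \in S -> f P = 0) -> (n <= #|S|)%N -> forall P, onH P -> f P = 0.
Proof.
move=> hS; elim: n f => [|n IH] f hf hz hn.
  exact: LtH0.
case: hf => c hc.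
case: (boolP (sgb n && (c n != 0))) => [/andP [sn cn]|h].
  have : lead n f.
    split => //; exists (c n); split => //.
    exists (ev n c); split; first by exists c.
    by move=> P hP; rewrite hc // /ev big_ord_recr /= addrC.
  move/(ZB0 hS)/(_ hz) => hle; lia.
apply: IH => //; last by lia.
exists c => P hP; rewrite hc // /ev big_ord_recr /=.
move: h; rewrite negb_and negbK => /orP [hs|/eqP ->]; last by rewrite mul0r addr0.
by rewrite /M (negbTE hs) mulr0 addr0.
Qed.


Lemma card_lt_pairs : (2 * #|[set p : 'I_q * 'I_q | (p.1 < p.2)%N]| + q = q * q)%N.
Proof.
set A := [set p : 'I_q * 'I_q | (p.1 < p.2)%N].
set A' := [set p : 'I_q * 'I_q | (p.2 < p.1)%N].
set Dg := [set p : 'I_q * 'I_q | p.1 == p.2].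
have hA' : #|A'| = #|A|.
  have -> : A' = [set (p.2, p.1) | p in A].
    apply/setP => [[a b]]; rewrite !inE /=; apply/idP/imsetP.
      by move=> h; exists (b, a); rewrite ?inE.
    by move=> [[c d]]; rewrite inE /= => h [-> ->].
  by apply: card_imset => [[a b] [c d]] [-> ->].
have hD : #|Dg| = q.
  have -> : Dg = [set (i, i) | i in [set: 'I_q]].
    apply/setP => [[a b]]; rewrite !inE /=; apply/eqP/imsetP.
      by move=> ->; exists b; rewrite ?inE.
    by move=> [c _ [-> ->]].
  by rewrite card_imset ?cardsT ?card_ord // => i j [].
have hT : [set: 'I_q * 'I_q] = A :|: (A' :|: Dg).
  apply/setP => [[a b]]; rewrite !inE /=; apply/esym.
  by case: (ltngtP a b) => h //=; apply/eqP/val_inj.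
have d1 : A' :&: Dg = set0.
  apply/setP => [[a b]]; rewrite !inE /=; apply/negP => /andP [h1 /eqP h2].
  by move: h1; rewrite h2 ltnn.
have d2 : A :&: (A' :|: Dg) = set0.
  apply/setP => [[a b]]; rewrite !inE /=; apply/negP => /andP [h1 /orP [h2|/eqP h2]].
    have := ltn_trans h1 h2; by rewrite ltnn.
  by move: h1; rewrite h2 ltnn.
have := cardsUI A' Dg; rewrite d1 cards0 addn0 => e1.
have := cardsUI A (A' :|: Dg); rewrite d2 cards0 addn0 -hT cardsT card_prod card_ord => e2.
lia.
Qed.

Lemma genusE : herm_genus q = #|[set p : 'I_q * 'I_q | (p.1 < p.2)%N]|.
Proof.
have h := card_lt_pairs; rewrite /herm_genus.
have -> : (q * (q - 1) = 2 * #|[set p : 'I_q * 'I_q | (p.1 < p.2)%N]|)%N by nia.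
by rewrite mulKn.
Qed.

Lemma gap_count d : (#|[set e : 'I_d | ~~ sgb e]| <= herm_genus q)%N.
Proof.
rewrite genusE.
pose phi (e : 'I_d) : 'I_q * 'I_q := (Ordinal (ltn_pmod (e %/ q) q_gt0), Ordinal (ltn_pmod e q_gt0)).
have gapP : forall e : 'I_d, ~~ sgb e -> (e %/ q < e %% q)%N /\ (e %/ q < q)%N.
  move=> e; rewrite /sgb -ltnNge => h; split => //.
  apply: leq_trans h _; apply: ltnW; exact: ltn_pmod q_gt0.
have inj : {in [set e : 'I_d | ~~ sgb e] &, injective phi}.
  move=> e1 e2; rewrite !inE => /gapP [a1 b1] /gapP [a2 b2].
  move/(congr1 (fun p : 'I_q * 'I_q => (val p.1, val p.2))) => /= [h1 h2].
  rewrite !(modn_small b1, modn_small b2) in h1; apply: val_inj => /=.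
  by rewrite (divn_eq e1 q) (divn_eq e2 q) h1 h2.
rewrite -(card_in_imset inj); apply: subset_leq_card; apply/subsetP => p /imsetP [e].
by rewrite !inE => /gapP [a b] ->; rewrite /= modn_small.
Qed.

Lemma lead_prod (s : seq (F * F)) : lead (q * size s) (fun P => \prod_(Q <- s) (P.1 - Q.1)).
Proof.
elim: s => [|Q s IH].
  split; first by rewrite muln0 sgb0.
  exists 1; split; first exact: oner_neq0.
  exists (fun _ => 0); split; first exact: Lt0.
  by move=> P _; rewrite big_nil muln0 M0 mulr1 addr0.
have := lead_mul (lead_x Q.1) IH; rewrite -mulnS /=.
move=> [h1 [a [a0 [g [hg e]]]]]; split => //; exists a; split => //; exists g; split => //.
by move=> P hP; rewrite big_cons -e.
Qed.

Lemma D_bound (S : {set F * F}) B (t : 'I_B) : (forall P, P \in S -> onH P) ->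
  (forall v, (B <= v)%N -> sgb v -> Ep S v) -> Db S t ->
  (t < #|S| + 2 * herm_genus q)%N.
Proof.
move=> hS hB hDt.
have tB := ltn_ord t.
set Om := [set e : 'I_t.+1 | sgb e && sgb (t - e)].
pose psi (e : 'I_t.+1) : 'I_B := Ordinal (leq_ltn_trans (leq_subr e t) tB).
have inj : {in Om &, injective psi}.
  move=> e1 e2 _ _ [] h; apply: val_inj => /=.
  have := ltn_ord e1; have := ltn_ord e2; lia.
have sub : psi @: Om \subset [set u : 'I_B | Db S u].
  apply/subsetP => u /imsetP [e]; rewrite !inE => /andP [se st] ->.
  rewrite /Db /= st /=; apply/negP => /EbP hE.
  move: hDt; rewrite /Db => /andP [_ /negP]; apply; apply/EbP.
  have := Ep_add hE se; rewrite subnK //; have := ltn_ord e; lia.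
have cOm : (#|Om| <= #|S|)%N.
  rewrite -(card_in_imset inj); apply: leq_trans (subset_leq_card sub) _.
  exact: card_D_le_S.
set G1 := [set e : 'I_t.+1 | ~~ sgb e].
set G2 := [set e : 'I_t.+1 | ~~ sgb (t - e)].
have cG1 : (#|G1| <= herm_genus q)%N by apply: gap_count.
have cG2 : #|G2| = #|G1|.
  have -> : G2 = (@rev_ord t.+1) @^-1: G1.
    by apply/setP => e; rewrite !inE /= subSS.
  by rewrite card_preimset //; exact: rev_ord_inj.
have cover : [set: 'I_t.+1] \subset Om :|: (G1 :|: G2).
  apply/subsetP => e _; rewrite !inE.
  by case: (sgb e); case: (sgb (t - e)).
have := subset_leq_card cover; rewrite cardsT card_ord => h.
have h2 := leq_card_setU Om (G1 :|: G2).
have h3 := leq_card_setU G1 G2.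
case: h2 => h2 _; case: h3 => h3 _.
apply: (leq_trans h); apply: (leq_trans h2); rewrite mul2n -addnn; apply: leq_add cOm _.
by apply: (leq_trans h3); rewrite cG2; apply: (leq_add cG1 cG1).
Qed.

Lemma SURJ (S : {set F * F}) n : (forall P, P \in S -> onH P) ->
  (#|S| + 2 * herm_genus q <= n)%N ->
  forall g : F * F -> F, exists c, forall P, P \in S -> g P = ev n c P.
Proof.
move=> hS hn g.
have hl := lead_prod (enum S).
have hE0 : Ep S (q * size (enum S)).
  exists (fun P => \prod_(Q <- enum S) (P.1 - Q.1)); split => // P hP.
  rewrite (big_rem P) /= ?mem_enum // subrr mul0r //.
set B := (q * size (enum S) + q * q)%N.
have hB : forall v, (B <= v)%N -> sgb v -> Ep S v.
  move=> v hv _; have -> : v = (q * size (enum S) + (v - q * size (enum S)))%N by lia.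
  apply: Ep_add hE0 _; apply: sgb_big; nia.
have [n0 hn0] := all_Lt g.
have [d0 hd0] := span_Lt hS hB hn0.
have hL : Lt n (fun P => \sum_(t < B) (if Db S t then d0 t else 0) * M t P).
  apply: Lt_big => t _; case hD: (Db S t).
    apply: LtZ; apply: LtM; apply: leq_trans (D_bound hS hB hD) hn.
  by apply: Lt_ext (Lt0 n) => P _; rewrite mul0r.
case: hL => c hc; exists c => P hP; by rewrite hd0 // hc // hS.
Qed.

End Herm.


Lemma same_distr_bij (R : finType) (V : eqType) (f g : R -> V) (phi : R -> R) :
  injective phi -> (forall r, g (phi r) = f r) -> same_distr f g.
Proof.
move=> inj e v.
have -> : [set r | f r == v] = phi @^-1: [set r | g r == v].
  by apply/setP => r; rewrite !inE e.
exact: card_preimset.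
Qed.

Section Scheme.
Variables (q : nat) (F : finFieldType) (X T L : nat) (alpha : nat -> F) (beta : nat -> nat -> F).
Hypothesis hq : (1 < q)%N.
Variable m : nat.
Hypothesis hqm : (m * q = L + herm_genus q)%N.
Hypothesis hinj : {in [pred i | (0 < i <= m)%N] &, injective alpha}.
Hypothesis hon : forall i z, (0 < i <= m)%N -> (0 < z <= q)%N -> on_hermitian q (alpha i, beta i z).
Hypothesis hdist : forall i z i' z', (0 < i <= m)%N -> (0 < z <= q)%N ->
     (0 < i' <= m)%N -> (0 < z' <= q)%N ->
     (alpha i, beta i z) = (alpha i', beta i' z') -> i = i' /\ z = z'.
Variable N : nat.
Variable pts : 'I_N -> F * F.
Hypothesis pts_inj : injective pts.
Hypothesis pts_on : forall n, onH q (pts n).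
Hypothesis pts_off : forall n (i : 'I_m), (pts n).1 != alpha i.+1.
Let G := herm_genus q.
Let nX := (X + 2 * G)%N.
Let nT := (T + 2 * G)%N.
Let nI := (q + nX + nT)%N.
Hypothesis hN : (q * m + nI <= N)%N.
Variable Mf : nat.

Local Notation Sl := ('I_m * 'I_q)%type.
Definition al (k : Sl) : F := alpha k.1.+1.
Definition sv (v : 'rV[F]_L) (k : Sl) : F :=
  odflt 0 (omap (fun l : 'I_L => v ord0 l) (insub (q * k.1 + k.2)%N)).
Definition evf n (k : {ffun 'I_n -> F}) (P : F * F) : F := \sum_(t < n) k t * M q t P.

Lemma evf_Lt n (k : {ffun 'I_n -> F}) : Lt q n (evf k).
Proof.
exists (fun t => odflt 0 (omap k (insub t))) => P _.
by rewrite /ev /evf; apply: eq_bigr => t _; rewrite valK.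
Qed.

Lemma evf_lin n (k1 k2 : {ffun 'I_n -> F}) a P :
  evf [ffun t => k1 t + a * k2 t] P = evf k1 P + a * evf k2 P.
Proof.
rewrite /evf mulr_sumr -big_split /=; apply: eq_bigr => t _.
by rewrite !ffunE mulrDl mulrA.
Qed.

Lemma evf_of n (c : nat -> F) P : evf [ffun t : 'I_n => c t] P = ev q n c P.
Proof. by rewrite /evf /ev; apply: eq_bigr => t _; rewrite ffunE. Qed.

Lemma den_neq0 n (k : Sl) : (pts n).1 - al k != 0.
Proof. by rewrite subr_eq0; apply: pts_off. Qed.

Definition RSt := {ffun 'I_Mf * Sl -> {ffun 'I_nX -> F}}.
Definition RQt := {ffun 'I_Mf * Sl -> {ffun 'I_nT -> F}}.
Definition Wty := {ffun 'I_Mf * Sl -> F}.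

Definition store (s : {ffun 'I_Mf -> 'rV[F]_L}) (rs : RSt) (n : 'I_N) : Wty :=
  [ffun j : 'I_Mf * Sl => sv (s j.1) j.2 + ((pts n).1 - al j.2) * evf (rs j) (pts n)].
Definition query (mu : 'I_Mf) (r : RQt) (n : 'I_N) : Wty :=
  [ffun j : 'I_Mf * Sl => (j.1 == mu)%:R * ((pts n).2 ^+ j.2.2 / ((pts n).1 - al j.2)) + evf (r j) (pts n)].
Definition answer (n : 'I_N) (Qv Wv : Wty) : F := \sum_j Qv j * Wv j.
Definition Dp (v : 'rV[F]_L) (P : F * F) : F :=
  \sum_(k : Sl) sv v k * (P.2 ^+ k.2 / (P.1 - al k)).
Definition decode (mu : 'I_Mf) (r : RQt) (a : 'I_N -> F) : 'rV[F]_L :=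
  odflt 0 [pick v : 'rV[F]_L | [exists kk : {ffun 'I_nI -> F},
     [forall n : 'I_N, a n == Dp v (pts n) + evf kk (pts n)]]].


Definition Iint (s : {ffun 'I_Mf -> 'rV[F]_L}) (rs : RSt) (mu : 'I_Mf) (r : RQt) (P : F * F) : F :=
  \sum_(j : 'I_Mf * Sl) ((j.1 == mu)%:R * (P.2 ^+ j.2.2 * evf (rs j) P)
     + sv (s j.1) j.2 * evf (r j) P + (P.1 - al j.2) * evf (rs j) P * evf (r j) P).

Lemma answer_eq s rs mu r n :
  answer n (query mu r n) (store s rs n) = Dp (s mu) (pts n) + Iint s rs mu r (pts n).
Proof.
rewrite /answer.
have per : forall j : 'I_Mf * Sl, query mu r n j * store s rs n j =
   (j.1 == mu)%:R * (sv (s j.1) j.2 * ((pts n).2 ^+ j.2.2 / ((pts n).1 - al j.2)))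
   + ((j.1 == mu)%:R * ((pts n).2 ^+ j.2.2 * evf (rs j) (pts n))
     + sv (s j.1) j.2 * evf (r j) (pts n) + ((pts n).1 - al j.2) * evf (rs j) (pts n) * evf (r j) (pts n)).
  move=> j; rewrite !ffunE.
  have hd := den_neq0 n j.2.
  by field.
rewrite (eq_bigr (fun j => (j.1 == mu)%:R * (sv (s j.1) j.2 * ((pts n).2 ^+ j.2.2 / ((pts n).1 - al j.2)))
   + ((j.1 == mu)%:R * ((pts n).2 ^+ j.2.2 * evf (rs j) (pts n))
     + sv (s j.1) j.2 * evf (r j) (pts n) + ((pts n).1 - al j.2) * evf (rs j) (pts n) * evf (r j) (pts n)))); last first.
  by move=> j _; apply: per.
rewrite big_split /=; congr (_ + _).
rewrite -(pair_big predT predT (fun (a : 'I_Mf) (b : Sl) => (a == mu)%:R * (sv (s a) b * ((pts n).2 ^+ b.2 / ((pts n).1 - al b))))) /=.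
rewrite (bigD1 mu) //= [X in _ + X]big1 ?addr0.
  by rewrite /Dp; apply: eq_bigr => k _; rewrite eqxx mul1r.
move=> a ha; apply: big1 => k _; by rewrite (negbTE ha) mul0r.
Qed.

Lemma ypow z : Lt q (q.+1 * z).+1 (fun P : F * F => P.2 ^+ z).
Proof.
apply: (Lt_pow hq z).
by apply: Lt_ext (LtM F q (ltnSn q.+1)) => P _; rewrite (My hq).
Qed.

Lemma twoG : (2 * G = q * (q - 1))%N.
Proof. have h := card_lt_pairs hq; rewrite /G (genusE hq); nia. Qed.

Lemma Iint_Lt s rs mu r : Lt q nI (Iint s rs mu r).
Proof.
have tG := twoG.
apply: Lt_big => j _; apply: LtD; [apply: LtD|].
- apply: LtZ; apply: Lt_mono (Lt_mul hq (ypow j.2.2) (evf_Lt (rs j))).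
  have := ltn_ord j.2.2; rewrite /nI /nX /nT; nia.
- apply: LtZ; apply: Lt_mono (evf_Lt (r j)); rewrite /nI; lia.
- apply: Lt_mono (Lt_mul hq (Lt_mul hq (Lt_x_a hq (al j.2)) (evf_Lt (rs j))) (evf_Lt (r j))).
  rewrite /nI /nX /nT; lia.
Qed.


Lemma Lt_prod_seq (I : Type) (s : seq I) (Pr : pred I) (a : I -> F) :
  Lt q (q * size s).+1 (fun P : F * F => \prod_(i <- s | Pr i) (P.1 - a i)).
Proof.
elim: s => [|x s IH].
  by rewrite muln0; apply: Lt_ext (Lt_const q 1) => P _; rewrite big_nil.
case hx: (Pr x).
  have := Lt_mul hq (Lt_x_a hq (a x)) IH.
  have -> : ((q.+1 + (q * size s).+1).-1 = (q * size (x :: s)).+1)%N by rewrite /= mulnS; lia.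
  move=> h; apply: (Lt_ext _ h) => P _; by rewrite big_cons hx.
apply: (Lt_mono (n := (q * size s).+1)); first by rewrite /= mulnS; lia.
by apply: (Lt_ext _ IH) => P _; rewrite big_cons hx.
Qed.

Lemma size_ie k : size (index_enum 'I_k) = k.
Proof. by rewrite -(filter_predT (index_enum _)) deprecated_filter_index_enum -cardE card_ord. Qed.

Lemma Lt_prod_ord (Pr : pred 'I_m) (a : 'I_m -> F) :
  Lt q (q * m).+1 (fun P : F * F => \prod_(i < m | Pr i) (P.1 - a i)).
Proof. by have := Lt_prod_seq (index_enum 'I_m) Pr a; rewrite size_ie. Qed.

Definition Pk (k : Sl) (P : F * F) := \prod_(i < m | i != k.1) (P.1 - alpha i.+1).
Definition Pi (P : F * F) := \prod_(i < m) (P.1 - alpha i.+1).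

Lemma Pi_split (k : Sl) P : Pi P = (P.1 - al k) * Pk k P.
Proof. by rewrite /Pi (bigD1 k.1). Qed.

Lemma alpha_neq (i j : 'I_m) : i != j -> alpha i.+1 != alpha j.+1.
Proof.
move=> h; apply/negP => /eqP e; move: h; rewrite -(inj_eq val_inj) /=.
have := hinj; move/(_ i.+1 j.+1); rewrite !inE /= !ltn_ord => /(_ isT isT e) [->].
by rewrite eqxx.
Qed.

Lemma uniq_dec (v s0 : 'rV[F]_L) (kk : {ffun 'I_nI -> F}) (I0 : F * F -> F) :
  Lt q nI I0 ->
  (forall n, Dp v (pts n) + evf kk (pts n) = Dp s0 (pts n) + I0 (pts n)) -> v = s0.
Proof.
move=> hI hE.
pose Phi P := \sum_(k : Sl) (sv v k - sv s0 k) * (P.2 ^+ k.2 * Pk k P) + Pi P * (evf kk P - I0 P).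
have tG := twoG.
have hLt : Lt q (q * m + nI) Phi.
  apply: LtD.
    apply: Lt_big => k _; apply: LtZ.
    apply: Lt_mono (Lt_mul hq (ypow k.2) (Lt_prod_ord _ _)).
    have := ltn_ord k.2; rewrite /nI /nX /nT; nia.
  have := Lt_mul hq (Lt_prod_ord predT (fun i => alpha i.+1)) (LtB (evf_Lt kk) hI).
  by rewrite addSn.
have hz : forall n, Phi (pts n) = 0.
  move=> n; rewrite /Phi.
  have e1 : forall k : Sl, (pts n).2 ^+ k.2 * Pk k (pts n) = Pi (pts n) * ((pts n).2 ^+ k.2 / ((pts n).1 - al k)).
    move=> k; rewrite (Pi_split k); have hd := den_neq0 n k; by field.
  under eq_bigr => k _ do rewrite e1.
  have e3 : \sum_(k : Sl) (sv v k - sv s0 k) * (Pi (pts n) * ((pts n).2 ^+ k.2 / ((pts n).1 - al k)))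
      = Pi (pts n) * (Dp v (pts n) - Dp s0 (pts n)).
    rewrite /Dp mulrBr !mulr_sumr -sumrB; apply: eq_bigr => k _; ring.
  rewrite e3 -mulrDr.
  have -> : Dp v (pts n) - Dp s0 (pts n) + (evf kk (pts n) - I0 (pts n)) =
     (Dp v (pts n) + evf kk (pts n)) - (Dp s0 (pts n) + I0 (pts n)) by ring.
  by rewrite hE subrr mulr0.
have hS : forall P, P \in [set pts n | n in 'I_N] -> onH q P.
  by move=> P /imsetP [n _ ->].
have hz' : forall P, P \in [set pts n | n in 'I_N] -> Phi P = 0.
  by move=> P /imsetP [n _ ->].
have hcard : (q * m + nI <= #|[set pts n | n in 'I_N]|)%N.
  by rewrite card_imset // card_ord.
have hzero := ZB hq hS hLt hz' hcard.
pose D (k : Sl) := sv v k - sv s0 k.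
have hroot : forall (i : 'I_m) (z0 : 'I_q),
    \sum_(b < q) D (i, b) * (beta i.+1 z0.+1) ^+ b = 0.
  move=> i z0.
  set Pf := (alpha i.+1, beta i.+1 z0.+1).
  have hPf : onH q Pf.
    by apply: hon; rewrite /= ltn_ord.
  have := hzero Pf hPf; rewrite /Phi.
  have -> : Pi Pf = 0 by rewrite /Pi (bigD1 i) //= subrr mul0r.
  rewrite mul0r addr0.
  have eS : \sum_(k : Sl) D k * (Pf.2 ^+ k.2 * Pk k Pf) =
      \sum_(a < m) \sum_(b < q) D (a, b) * (Pf.2 ^+ b * Pk (a, b) Pf).
    by rewrite pair_big; apply: eq_bigr => [[a b]] _.
  rewrite eS (bigD1 i) //= [X in _ + X]big1 ?addr0; last first.
    move=> a ha; apply: big1 => b _.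
    by rewrite /Pk (bigD1 i) /= ?subrr ?mul0r ?mulr0 // eq_sym.
  set ci := \prod_(i' < m | i' != i) (alpha i.+1 - alpha i'.+1).
  have hci : ci != 0.
    apply/prodf_neq0 => i' hi'; rewrite subr_eq0; apply: alpha_neq; by rewrite eq_sym.
  have e4 : forall b : 'I_q, D (i, b) * (Pf.2 ^+ b * Pk (i, b) Pf) = ci * (D (i, b) * (beta i.+1 z0.+1) ^+ b).
    by move=> b; rewrite /Pk /ci /=; ring.
  under eq_bigr => b _ do rewrite e4.
  rewrite -mulr_sumr => /eqP; rewrite mulf_eq0 (negbTE hci) /= => /eqP ->.
  by [].
have hD0 : forall (i : 'I_m) (b : 'I_q), D (i, b) = 0.
  move=> i.
  pose E (b : nat) := odflt 0 (omap (fun bb : 'I_q => D (i, bb)) (insub b)).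
  pose p := \poly_(b < q) E b.
  have hp : p = 0.
    apply/eqP; apply/contraT => pn0.
    pose rs := [seq beta i.+1 (val z).+1 | z <- enum 'I_q].
    have hall : all (root p) rs.
      apply/allP => x /mapP [z _ ->]; rewrite /root /p horner_poly.
      apply/eqP; rewrite -[RHS](hroot i z); apply: eq_bigr => b _; by rewrite /E valK.
    have huniq : uniq rs.
      rewrite map_inj_uniq ?enum_uniq // => z1 z2 e.
      have := hdist (i := i.+1) (z := (val z1).+1) (i' := i.+1) (z' := (val z2).+1).
      rewrite !ltn_ord /= => /(_ isT isT isT isT); rewrite e => /(_ erefl) [_ [h]].
      exact: val_inj.
    have := max_poly_roots pn0 hall huniq.
    rewrite size_map size_enum_ord => h.
    by have := leq_trans h (size_poly q E); rewrite ltnn.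
  move=> b; have := congr1 (fun r : {poly F} => r`_b) hp.
  by rewrite /p coef_poly ltn_ord /E valK coef0.
apply/rowP => l.
have hl : (l %/ q < m)%N.
  by rewrite ltn_divLR ?(q_gt0 hq) // hqm; have := ltn_ord l; lia.
have := hD0 (Ordinal hl) (Ordinal (ltn_pmod l (q_gt0 hq))).
rewrite /D /sv /=.
have -> : (q * (l %/ q) + l %% q)%N = l by rewrite mulnC -divn_eq.
rewrite valK /= => /eqP; rewrite subr_eq0 => /eqP.
by [].
Qed.




Lemma decode_correct s rs mu r :
  decode mu r (fun n => answer n (query mu r n) (store s rs n)) = s mu.
Proof.
rewrite /decode; case: pickP => [v hv|hn] /=.
  have [kk hv'] := existsP hv.
  apply: (uniq_dec (kk := kk) (Iint_Lt s rs mu r)) => n.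
  by have := forallP hv' n; rewrite answer_eq => /eqP ->.
exfalso.
have [c hc] := Iint_Lt s rs mu r.
have H1 : [exists kk : {ffun 'I_nI -> F}, [forall n : 'I_N,
    answer n (query mu r n) (store s rs n) == Dp (s mu) (pts n) + evf kk (pts n)]].
  apply/existsP; exists [ffun t : 'I_nI => c t].
  by apply/forallP => n; rewrite answer_eq evf_of hc.
by have := hn (s mu); rewrite /= H1.
Qed.

Lemma pick_target n0 (S : {set 'I_N}) (tg : F * F -> F) : (#|S| + 2 * G <= n0)%N ->
  exists h : {ffun 'I_n0 -> F}, forall n, n \in S -> evf h (pts n) = tg (pts n).
Proof.
move=> hS.
have hPS : forall P, P \in [set pts n | n in S] -> onH q P by move=> P /imsetP [n _ ->].
have hc : (#|[set pts n | n in S]| + 2 * G <= n0)%N.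
  by apply: leq_trans hS; rewrite leq_add2r leq_imset_card.
have [c hcP] := SURJ hq hPS hc tg.
exists [ffun t : 'I_n0 => c t] => n hn; rewrite evf_of -hcP //.
by apply/imsetP; exists n.
Qed.

Definition choose_target n0 (S : {set 'I_N}) (tg : F * F -> F) : {ffun 'I_n0 -> F} :=
  odflt 0 [pick h : {ffun 'I_n0 -> F} | [forall n in S, evf h (pts n) == tg (pts n)]].

Lemma choose_targetP n0 (S : {set 'I_N}) (tg : F * F -> F) : (#|S| + 2 * G <= n0)%N ->
  forall n, n \in S -> evf (choose_target n0 S tg) (pts n) = tg (pts n).
Proof.
move=> hS; rewrite /choose_target; case: pickP => [h /forallP hh|hn] /=.
  by move=> n hn; have := hh n; rewrite hn => /eqP.
exfalso; have [h hh] := pick_target tg hS.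
have H1 : [forall n in S, evf h (pts n) == tg (pts n)].
  by apply/forallP => n; apply/implyP => hnS; rewrite hh.
by have := hn h; rewrite /= H1.
Qed.

Lemma X_sec (S : {set 'I_N}) : (#|S| <= X)%N -> forall s s' : {ffun 'I_Mf -> 'rV[F]_L},
  same_distr (fun rs : RSt => [ffun n => restrict S (store s rs) n])
             (fun rs : RSt => [ffun n => restrict S (store s' rs) n]).
Proof.
move=> hS s s'.
have hS' : (#|S| + 2 * G <= nX)%N by rewrite /nX leq_add2r.
pose H (k : Sl) := choose_target nX S (fun P => (P.1 - al k)^-1).
pose D (j : 'I_Mf * Sl) : {ffun 'I_nX -> F} :=
  [ffun t => (sv (s j.1) j.2 - sv (s' j.1) j.2) * H j.2 t].
pose phi (rs : RSt) : RSt := [ffun j => [ffun t => rs j t + D j t]].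
apply: (same_distr_bij (phi := phi)).
  move=> r1 r2 e; apply/ffunP => j; apply/ffunP => t.
  have := congr1 (fun r : RSt => r j t) e; rewrite /phi !ffunE => /addIr.
  by [].
move=> rs; apply/ffunP => n; rewrite !ffunE /restrict.
case: ifP => // hn; congr Some; apply/ffunP => j; rewrite !ffunE.
have -> : evf [ffun t => rs j t + D j t] (pts n) = evf (rs j) (pts n) +
     (sv (s j.1) j.2 - sv (s' j.1) j.2) * evf (H j.2) (pts n).
  have -> : [ffun t => rs j t + D j t] = [ffun t => rs j t + (sv (s j.1) j.2 - sv (s' j.1) j.2) * H j.2 t].
    by apply/ffunP => t; rewrite !ffunE.
  exact: evf_lin.
rewrite (choose_targetP _ hS' hn).
have hd := den_neq0 n j.2.
by field.
Qed.

Lemma T_priv (S : {set 'I_N}) : (#|S| <= T)%N -> forall mu mu' : 'I_Mf,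
  same_distr (fun r : RQt => [ffun n => restrict S (query mu r) n])
             (fun r : RQt => [ffun n => restrict S (query mu' r) n]).
Proof.
move=> hS mu mu'.
have hS' : (#|S| + 2 * G <= nT)%N by rewrite /nT leq_add2r.
pose H (k : Sl) := choose_target nT S (fun P => P.2 ^+ k.2 / (P.1 - al k)).
pose D (j : 'I_Mf * Sl) : {ffun 'I_nT -> F} :=
  [ffun t => ((j.1 == mu)%:R - (j.1 == mu')%:R) * H j.2 t].
pose phi (r : RQt) : RQt := [ffun j => [ffun t => r j t + D j t]].
apply: (same_distr_bij (phi := phi)).
  move=> r1 r2 e; apply/ffunP => j; apply/ffunP => t.
  have := congr1 (fun r : RQt => r j t) e; rewrite /phi !ffunE => /addIr.
  by [].
move=> r; apply/ffunP => n; rewrite !ffunE /restrict.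
case: ifP => // hn; congr Some; apply/ffunP => j; rewrite !ffunE.
have -> : evf [ffun t => r j t + D j t] (pts n) = evf (r j) (pts n) +
     ((j.1 == mu)%:R - (j.1 == mu')%:R) * evf (H j.2) (pts n).
  have -> : [ffun t => r j t + D j t] = [ffun t => r j t + ((j.1 == mu)%:R - (j.1 == mu')%:R) * H j.2 t].
    by apply/ffunP => t; rewrite !ffunE.
  exact: evf_lin.
rewrite (choose_targetP _ hS' hn).
ring.
Qed.


Lemma RS_ne : (0 < #|RSt|)%N.
Proof. by apply/card_gt0P; exists [ffun _ => [ffun _ => 0]]. Qed.

Lemma RQ_ne : (0 < #|RQt|)%N.
Proof. by apply/card_gt0P; exists [ffun _ => [ffun _ => 0]]. Qed.

Definition the_scheme : xstpir_scheme F N Mf L X T :=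
  @XSTPIR F N Mf L X T RSt Wty RQt Wty RS_ne RQ_ne store query answer decode
    decode_correct X_sec T_priv.

End Scheme.


Lemma fiber_full (q : nat) (F : finFieldType) (m : nat) (alpha : nat -> F) (beta : nat -> nat -> F) :
  (1 < q)%N ->
  (forall i z, (0 < i <= m)%N -> (0 < z <= q)%N -> on_hermitian q (alpha i, beta i z)) ->
  (forall i z i' z', (0 < i <= m)%N -> (0 < z <= q)%N ->
     (0 < i' <= m)%N -> (0 < z' <= q)%N ->
     (alpha i, beta i z) = (alpha i', beta i' z') -> i = i' /\ z = z') ->
  forall (i : 'I_m) (P : F * F), on_hermitian q P -> P.1 = alpha i.+1 ->
  [exists z : 'I_q, P.2 == beta i.+1 z.+1].
Proof.
move=> hq hon hdist i P hP e1.
apply/contraT => hne.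
set c := alpha i.+1 ^+ q.+1.
pose p : {poly F} := 'X^q + ('X - c%:P).
have sp : size p = q.+1.
  by rewrite /p size_addl size_polyXn // size_XsubC.
have pn0 : p != 0 by rewrite -size_poly_eq0 sp.
have rootE : forall y : F, y ^+ q + y = c -> root p y.
  by move=> y hy; rewrite /root /p hornerD hornerXn hornerXsubC -hy addrA subrr.
pose rs := P.2 :: [seq beta i.+1 (val z).+1 | z <- enum 'I_q].
have hall : all (root p) rs.
  rewrite /= rootE; last by move/eqP: hP; rewrite e1 => <-.
  apply/allP => y /mapP [z _ ->]; apply: rootE.
  have := hon i.+1 (val z).+1; rewrite !ltn_ord /= => /(_ isT isT) /eqP <-.
  by [].
have hu : uniq rs.
  rewrite /= map_inj_uniq ?enum_uniq ?andbT.
    apply/mapP => [[z _ ez]]; move/negP: hne; apply.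
    by apply/existsP; exists z; rewrite ez.
  move=> z1 z2 e.
  have := hdist i.+1 (val z1).+1 i.+1 (val z2).+1.
  rewrite !ltn_ord /= => /(_ isT isT isT isT); rewrite e => /(_ erefl) [_ [h]].
  exact: val_inj.
have := max_poly_roots pn0 hall hu.
by rewrite sp /= size_map size_enum_ord ltnn.
Qed.

Unset Implicit Arguments.

Theorem theorem3p3
  (q : nat) (F : finFieldType) (X T L : nat)
  (alpha : nat -> F) (beta : nat -> nat -> F) :
  prime_power q ->
  #|F| = (q ^ 2)%N ->
  (0 < X)%N -> (0 < T)%N ->
  (herm_genus q <= L)%N -> (L <= q ^ 3 - herm_genus q)%N ->
  (L + herm_genus q = 0 %[mod q])%N ->
  let m := ((L + herm_genus q) %/ q)%N in
  (* alpha_1..alpha_m pairwise distinct, nonzero *)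
  {in [pred i | (0 < i <= m)%N] &, injective alpha} ->
  (forall i, (0 < i <= m)%N -> alpha i != 0) ->
  (* P_{i,z} = (alpha_i, beta_{i,z}) are mq distinct affine rational points *)
  (forall i z, (0 < i <= m)%N -> (0 < z <= q)%N ->
     on_hermitian q (alpha i, beta i z)) ->
  (forall i z i' z', (0 < i <= m)%N -> (0 < z <= q)%N ->
     (0 < i' <= m)%N -> (0 < z' <= q)%N ->
     (alpha i, beta i z) = (alpha i', beta i' z') -> i = i' /\ z = z') ->
  (* enough further rational points, distinct from P_inf, P_0, all P_{i,z} *)
  (L + X + T + (7 * q ^ 2 - 3 * q - 6) %/ 2 + 1 <=
     #|[set P : F * F | on_hermitian q P && (P != ((0%R : F), (0%R : F))) &&
         ~~ [exists i : 'I_m.+1, exists z : 'I_q.+1,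
              [&& (0 < i)%N, (0 < z)%N & P == (alpha i, beta i z)]]]|)%N ->
  let N := (L + X + T + (3 * q ^ 2 - q - 2))%N in
  forall M : nat,
    inhabited (xstpir_scheme F N M L X T) /\
    xstpir_rate N L = 1 - (X + T + (3 * q ^ 2 - q - 2))%N%:R / N%:R.
Proof.
move=> hpp hcard hX hT hgL hLg hmod m hinj hnz hon hdist hext N Mf.
have hq : (1 < q)%N.
  case: hpp => p [k [pp kp ->]].
  apply: leq_trans (prime_gt1 pp) _.
  by rewrite -{1}(expn1 p) leq_pexp2l // prime_gt0.
set G := herm_genus q.
have h2G : (2 * G = q * (q - 1))%N.
  have h := card_lt_pairs hq; rewrite /G (genusE hq); nia.
have hqm : (m * q = L + G)%N.
  rewrite /m divnK //; apply/eqP; by rewrite mod0n in hmod.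
have q2 : (q ^ 2 = q * q)%N by rewrite -mulnn.
have hQ : (2 * q <= q * q)%N by rewrite leq_mul2r hq orbT.
have h2G' : (2 * G = q * q - q)%N by rewrite h2G mulnBr muln1.
split; last first.
  rewrite /xstpir_rate.
  have hN0 : (N%:R : rat) != 0 by rewrite pnatr_eq0 /N; lia.
  have -> : (N%:R : rat) = L%:R + (X + T + (3 * q ^ 2 - q - 2))%N%:R.
    by rewrite -natrD /N !addnA.
  rewrite /N -!addnA natrD in hN0 *.
  field.
  by move: hN0; rewrite !natrD.
move: hext; set Ext := [set P : F * F | _] => hext.
have hNE : (N <= size (enum Ext))%N.
  rewrite -cardE; apply: leq_trans hext; rewrite /N -!addnA !leq_add2l.
  rewrite addn1.
  have h1 : ((3 * q ^ 2 - q - 2).-1 <= (7 * q ^ 2 - 3 * q - 6) %/ 2)%N.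
    rewrite leq_divRL // q2; move: hQ; generalize (q * q)%N => Q hQ'; lia.
  lia.
pose pts (n : 'I_N) := nth (0, 0) (enum Ext) n.
have pts_in : forall n, pts n \in Ext.
  by move=> n; rewrite -mem_enum; apply: mem_nth; apply: leq_trans (ltn_ord n) hNE.
have pts_inj : injective pts.
  move=> n1 n2 e; apply: val_inj => /=; apply/eqP.
  rewrite -(nth_uniq (0, 0) _ _ (enum_uniq (mem Ext))); first by apply/eqP.
    by apply: leq_trans (ltn_ord n1) hNE.
  by apply: leq_trans (ltn_ord n2) hNE.
have pts_on : forall n, onH q (pts n).
  by move=> n; have := pts_in n; rewrite inE => /andP [/andP [h _] _].
have pts_off : forall n (i : 'I_m), (pts n).1 != alpha i.+1.
  move=> n i; apply/negP => /eqP e.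
  have := pts_in n; rewrite inE => /andP [_ /negP]; apply.
  have := fiber_full hq hon hdist (pts_on n) e => /existsP [z ez].
  apply/existsP; exists (inord i.+1); apply/existsP; exists (inord z.+1).
  rewrite !inordK ?ltnS ?ltn_ord //=.
  by rewrite -(eqP ez) -e; case: (pts n).
have hN : (q * m + (q + (X + 2 * G) + (T + 2 * G)) <= N)%N.
  rewrite /N mulnC hqm q2; move: hQ h2G'; generalize (q * q)%N => Q hQ' h2'; lia.
split; exact: (the_scheme hq hqm hinj hon hdist pts_inj pts_on pts_off hN Mf).
Qed.
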